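(* The set of variables satisfying the KKT condition of the covariance selection problem is the set of all tuples $(\lambda ,S_k^\lambda ,F_k^\lambda ,P_k^\lambda )_{k = 0}^{N - 1}$ such that $\lambda>0$ and $C(\{ S_k^\lambda \} _{k = 0}^{N - 1} ) = \gamma$.
   Context: Consider the stochastic LTI system $x(k+1)=Ax(k)+Bu(k)+w(k)$ with $x(k)\in\mathbb R^n$, $u(k)\in\mathbb R^m$, $x(0)\sim\mathcal N(z,V)$, $w(k)\sim\mathcal N(0,W)$ mutually independent, and linear feedback $u(k)=F_kx(k)$, $k\in\{0,\dots,N-1\}$. With $S_k=\mathbb E([x(k);u(k)][x(k);u(k)]^T)$, the covariance selection problem is: minimize $J_p(\{S_k\})=\mathrm{Tr}\big(Q_f([A\ B]S_{N-1}[A\ B]^T+W)\big)+\sum_{k=0}^{N-1}\mathrm{Tr}(\mathrm{diag}(Q_k,R_k)S_k)$ over $\{S_k,F_k\}$ subject to $S_k=\Phi(F_k,S_{k-1})$ ($k=1,\dots,N-1$), $S_0=[I_n;F_0](V+zz^T)[I_n;F_0]^T$, and $C(\{S_k\})\le\gamma$, where $C(\{S_k\})=\mathrm{Tr}\big(\tilde Q_f([A\ B]S_{N-1}[A\ B]^T+W)\big)+\sum_{k=0}^{N-1}\mathrm{Tr}(\mathrm{diag}(\tilde Q_k,\tilde R_k)S_k)$ and $\Phi(F,S)=[I_n;F]([A\ B]S[A\ B]^T+W)[I_n;F]^T$. The KKT condition refers to the Lagrangian $L=J_p+\sum_{k=1}^{N-1}\mathrm{Tr}((\Phi(F_k,S_{k-1})-S_k)P_k)+\mathrm{Tr}(([I;F_0](V+zz^T)[I;F_0]^T-S_0)P_0)+\lambda(C(\{S_k\})-\gamma)$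 with multipliers $P_k\in\mathbb S^{n+m}$, $\lambda\ge0$: primal feasibility, complementary slackness $\lambda(C(\{S_k\})-\gamma)=0$, dual feasibility $\lambda\ge0$, and stationarity of $L$ in $(S_k,F_k)$. Assumptions: $Q_f,\tilde Q_f,Q_k,\tilde Q_k\succeq0$, $R_k+\lambda\tilde R_k\succ0$ for all $k$, $\lambda>0$; $V\succ0$, $W\succ0$; strict feasibility of the constraint. For $\lambda\ge0$, $X_N^\lambda=Q_f+\lambda\tilde Q_f$, $X_k^\lambda=A^TX_{k+1}^\lambda A-A^TX_{k+1}^\lambda B(R_k+\lambda\tilde R_k+B^TX_{k+1}^\lambda B)^{-1}B^TX_{k+1}^\lambda A+Q_k+\lambda\tilde Q_k$, $F_k^\lambda=-(R_k+\lambda\tilde R_k+B^TX_{k+1}^\lambda B)^{-1}B^TX_{k+1}^\lambda A$, $S_0^\lambda=[I;F_0^\lambda](V+zz^T)[I;F_0^\lambda]^T$, $S_k^\lambda=\Phi(F_k^\lambda,S_{k-1}^\lambda)$, and $P_k^\lambda=\begin{bmatrix}Q_k+\lambda\tilde Q_k+A^TX_{k+1}^\lambda A & A^TX_{k+1}^\lambda B\\ B^TX_{k+1}^\lambda A & R_k+\lambda\tilde R_k+B^TX_{k+1}^\lambda B\end{bmatrix}$. It was shown that for each fixed $\lambda$, $(S_k^\lambda,F_k^\lambda,P_k^\lambda)$ uniquely satisfy primal feasibility equalities and stationarity. Nontrivial-scenario assumption: $C(\{S_k^0\})>\gamma$. *)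

(* Defs.v *)
From HB Require Import structures.
From mathcomp Require Import all_boot all_order all_algebra.
From mathcomp Require Import all_classical all_reals all_analysis.
Set Implicit Arguments. Unset Strict Implicit. Unset Printing Implicit Defensive.
Import Order.TTheory GRing.Theory Num.Theory.
Import numFieldNormedType.Exports.
Local Open Scope ring_scope.

(* Data of the covariance selection problem. Time indices are natural numbers;
   only indices k < N are relevant. *)
Record problem (R : realType) (n m : nat) := Problem {
  pA : 'M[R]_n;
  pB : 'M[R]_(n, m);
  pW : 'M[R]_n;            (* covariance of w(k) *)
  pV : 'M[R]_n;            (* covariance of x(0) *)
  pz : 'cV[R]_n;           (* mean of x(0) *)
  pN : nat;
  pQ : nat -> 'M[R]_n;
  pR : nat -> 'M[R]_m;
  pQf : 'M[R]_n;
  pQt : nat -> 'M[R]_n;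
  pRt : nat -> 'M[R]_m;
  pQft : 'M[R]_n;
  pgamma : R
}.

Section Defs.
Variables (R : realType) (n m : nat).

Definition symmetric (k : nat) (M : 'M[R]_k) : Prop := M^T = M.
Definition psd (k : nat) (M : 'M[R]_k) : Prop :=
  M^T = M /\ forall x : 'cV[R]_k, 0 <= (x^T *m M *m x) 0 0.
Definition pd (k : nat) (M : 'M[R]_k) : Prop :=
  M^T = M /\ forall x : 'cV[R]_k, x != 0 -> 0 < (x^T *m M *m x) 0 0.

Variable p : problem R n m.

Definition AB : 'M[R]_(n, n + m) := row_mx (pA p) (pB p).
Definition IF (F : 'M[R]_(m, n)) : 'M[R]_(n + m, n) := col_mx 1%:M F.
Definition bdiag (Q : 'M[R]_n) (Rm : 'M[R]_m) : 'M[R]_(n + m) :=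
  block_mx Q 0 0 Rm.

Definition Phi (F : 'M[R]_(m, n)) (S : 'M[R]_(n + m)) : 'M[R]_(n + m) :=
  IF F *m (AB *m S *m AB^T + pW p) *m (IF F)^T.

Definition Sinit (F : 'M[R]_(m, n)) : 'M[R]_(n + m) :=
  IF F *m (pV p + pz p *m (pz p)^T) *m (IF F)^T.

Definition Jp (S : nat -> 'M[R]_(n + m)) : R :=
  \tr (pQf p *m (AB *m S (pN p).-1 *m AB^T + pW p))
  + \sum_(k < pN p) \tr (bdiag (pQ p k) (pR p k) *m S k).

Definition Ccost (S : nat -> 'M[R]_(n + m)) : R :=
  \tr (pQft p *m (AB *m S (pN p).-1 *m AB^T + pW p))
  + \sum_(k < pN p) \tr (bdiag (pQt p k) (pRt p k) *m S k).

Definition Lagr (lam : R) (P : nat -> 'M[R]_(n + m))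
    (S : nat -> 'M[R]_(n + m)) (F : nat -> 'M[R]_(m, n)) : R :=
  Jp S
  + \sum_(1 <= k < pN p) \tr ((Phi (F k) (S k.-1) - S k) *m P k)
  + \tr ((Sinit (F 0%N) - S 0%N) *m P 0%N)
  + lam * (Ccost S - pgamma p).

Definition upd (T : Type) (f : nat -> T) (j : nat) (y : T) : nat -> T :=
  fun k => if k == j then y else f k.

Fixpoint traj (F : nat -> 'M[R]_(m, n)) (k : nat) : 'M[R]_(n + m) :=
  match k with
  | 0 => Sinit (F 0%N)
  | k'.+1 => Phi (F k) (traj F k')
  end.

Definition KKT (lam : R) (S : nat -> 'M[R]_(n + m)) (F : nat -> 'M[R]_(m, n))
    (P : nat -> 'M[R]_(n + m)) : Prop :=
  (forall k, (k < pN p)%N -> symmetric (S k) /\ symmetric (P k)) /\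
  S 0%N = Sinit (F 0%N) /\
  (forall k, (1 <= k < pN p)%N -> S k = Phi (F k) (S k.-1)) /\
  Ccost S <= pgamma p /\
  lam * (Ccost S - pgamma p) = 0 /\
  0 <= lam /\
  (forall j, (j < pN p)%N -> forall D : 'M[R]_(n + m), symmetric D ->
     is_derive (0 : R) (1 : R)
       (fun t : R => Lagr lam P (upd S j (S j + t *: D)) F) 0) /\
  (forall j, (j < pN p)%N -> forall E : 'M[R]_(m, n),
     is_derive (0 : R) (1 : R)
       (fun t : R => Lagr lam P S (upd F j (F j + t *: E))) 0).

(* Riccati recursion: Xrec lam i = X^lam_{N-i} *)
Definition Ric_step (lam : R) (k : nat) (X : 'M[R]_n) : 'M[R]_n :=
  (pA p)^T *m X *m pA p
  - (pA p)^T *m X *m pB p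
      *m invmx (pR p k + lam *: pRt p k + (pB p)^T *m X *m pB p)
      *m (pB p)^T *m X *m pA p
  + pQ p k + lam *: pQt p k.

Fixpoint Xrec (lam : R) (i : nat) : 'M[R]_n :=
  match i with
  | 0 => pQf p + lam *: pQft p
  | i'.+1 => Ric_step lam (pN p - i) (Xrec lam i')
  end.

(* X^lam_k for k <= N *)
Definition Xlam (lam : R) (k : nat) : 'M[R]_n := Xrec lam (pN p - k).

Definition Flam (lam : R) (k : nat) : 'M[R]_(m, n) :=
  - (invmx (pR p k + lam *: pRt p k + (pB p)^T *m Xlam lam k.+1 *m pB p)
       *m (pB p)^T *m Xlam lam k.+1 *m pA p).

Definition Slam (lam : R) : nat -> 'M[R]_(n + m) := traj (Flam lam).

Definition Plam (lam : R) (k : nat) : 'M[R]_(n + m) :=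
  block_mx (pQ p k + lam *: pQt p k + (pA p)^T *m Xlam lam k.+1 *m pA p)
           ((pA p)^T *m Xlam lam k.+1 *m pB p)
           ((pB p)^T *m Xlam lam k.+1 *m pA p)
           (pR p k + lam *: pRt p k + (pB p)^T *m Xlam lam k.+1 *m pB p).

End Defs.

(* Main.v *)
Require Import Defs.
From HB Require Import structures.
From mathcomp Require Import all_boot all_order all_algebra.
From mathcomp Require Import all_classical all_reals all_analysis.
From mathcomp Require Import ring lra zify.
Import Order.TTheory GRing.Theory Num.Theory.
Import numFieldNormedType.Exports.
Local Open Scope ring_scope.

Section Main.
Variables (R : realType) (n m : nat) (p : problem R n m).

Definition Qp (lam : R) k := pQ p k + lam *: pQt p k.
Definition Rp (lam : R) k := pR p k + lam *: pRt p k.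
Definition Gm lam k (X : 'M[R]_n) := Rp lam k + (pB p)^T *m X *m pB p.
Definition Fm lam k (X : 'M[R]_n) : 'M[R]_(m, n) :=
  - (invmx (Gm lam k X) *m (pB p)^T *m X *m pA p).
Definition Pm lam k (X : 'M[R]_n) : 'M[R]_(n + m) :=
  block_mx (Qp lam k + (pA p)^T *m X *m pA p) ((pA p)^T *m X *m pB p)
           ((pB p)^T *m X *m pA p) (Gm lam k X).

Lemma PlamE lam k : Plam p lam k = Pm lam k (Xlam p lam k.+1).
Proof. by []. Qed.
Lemma FlamE lam k : Flam p lam k = Fm lam k (Xlam p lam k.+1).
Proof. by []. Qed.

Lemma trIF (F : 'M[R]_(m, n)) : (IF F)^T = row_mx 1%:M F^T.
Proof. by rewrite /IF tr_col_mx trmx1. Qed.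

Lemma IFPIF (P11 : 'M[R]_n) P12 P21 (P22 : 'M[R]_m) F :
  (IF F)^T *m block_mx P11 P12 P21 P22 *m IF F
  = P11 + F^T *m P21 + (P12 + F^T *m P22) *m F.
Proof. by rewrite trIF mul_row_block !mul1mx /IF mul_row_col mulmx1. Qed.

Lemma rsubIFP (P11 : 'M[R]_n) P12 P21 (P22 : 'M[R]_m) F :
  rsubmx ((IF F)^T *m block_mx P11 P12 P21 P22) = P12 + F^T *m P22.
Proof. by rewrite trIF mul_row_block row_mxKr mul1mx. Qed.

Lemma FmT lam k X : X^T = X -> (Gm lam k X)^T = Gm lam k X ->
  (Fm lam k X)^T = - ((pA p)^T *m X *m pB p *m invmx (Gm lam k X)).
Proof.
move=> HX HG; rewrite /Fm raddfN /= !trmx_mul trmx_inv HG HX trmxK.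
by rewrite !mulmxA.
Qed.

Lemma key_rsub lam k X : X^T = X -> (Gm lam k X)^T = Gm lam k X ->
  Gm lam k X \in unitmx ->
  (pA p)^T *m X *m pB p + (Fm lam k X)^T *m Gm lam k X = 0.
Proof.
move=> HX HG HU; rewrite FmT // mulNmx -[_ *m invmx _ *m _]mulmxA mulVmx // mulmx1.
by rewrite addrN.
Qed.

Lemma key_ric lam k X : X^T = X -> (Gm lam k X)^T = Gm lam k X ->
  Gm lam k X \in unitmx ->
  (IF (Fm lam k X))^T *m Pm lam k X *m IF (Fm lam k X) = Ric_step p lam k X.
Proof.
move=> HX HG HU; rewrite /Pm IFPIF key_rsub // mul0mx addr0.
rewrite FmT // mulNmx /Ric_step /Qp !mulmxA.
rewrite /Gm /Rp.
set a := (pA p)^T *m X *m pA p.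
set b := (pA p)^T *m X *m pB p *m _ *m (pB p)^T *m X *m pA p.
set c := pQ p k. set d := lam *: pQt p k.
by rewrite -[RHS]addrA [RHS]addrC addrA.
Qed.



Lemma psd_congr k l (M : 'M[R]_k) (X : 'M[R]_(k, l)) :
  psd M -> psd (X^T *m M *m X).
Proof.
move=> [HS HP]; split.
  by rewrite !trmx_mul trmxK HS mulmxA.
move=> x; have := HP (X *m x).
by rewrite !trmx_mul !mulmxA.
Qed.

Lemma psdD k (M N : 'M[R]_k) : psd M -> psd N -> psd (M + N).
Proof.
move=> [HS HP] [HS' HP']; split; first by rewrite raddfD /= HS HS'.
by move=> x; rewrite mulmxDr mulmxDl mxE addr_ge0.
Qed.

Lemma psdZ k (a : R) (M : 'M[R]_k) : 0 <= a -> psd M -> psd (a *: M).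
Proof.
move=> ha [HS HP]; split; first by rewrite linearZ /= HS.
by move=> x; rewrite -scalemxAr -scalemxAl mxE mulr_ge0.
Qed.

Lemma pd_psdD k (M N : 'M[R]_k) : pd M -> psd N -> pd (M + N).
Proof.
move=> [HS HP] [HS' HP']; split; first by rewrite raddfD /= HS HS'.
by move=> x hx; rewrite mulmxDr mulmxDl mxE; have := HP x hx; have := HP' x; lra.
Qed.

Lemma pd_psd k (M : 'M[R]_k) : pd M -> psd M.
Proof.
move=> [HS HP]; split=> // x; have [->|hx] := eqVneq x 0.
  by rewrite mulmx0 mxE.
exact: ltW (HP x hx).
Qed.

Lemma pd_unit k (M : 'M[R]_k) : pd M -> M \in unitmx.
Proof.
move=> [HS HP]; rewrite -row_free_unit -kermx_eq0; apply/rowV0P => v /sub_kermxP vM.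
apply/eqP; apply/negPn/negP => nz.
have := HP v^T; rewrite trmx_eq0 => /(_ nz).
by rewrite trmxK vM mul0mx mxE ltxx.
Qed.

Lemma psd_bdiag k l (Q : 'M[R]_k) (Rm : 'M[R]_l) :
  psd Q -> psd Rm -> psd (block_mx Q 0 0 Rm).
Proof.
move=> HQ HR.
have -> : block_mx Q 0 0 Rm =
   (row_mx 1%:M 0)^T *m Q *m row_mx 1%:M 0 + (row_mx 0 1%:M)^T *m Rm *m row_mx 0 1%:M.
  rewrite !tr_row_mx !trmx1 !trmx0 !mul_col_mx !mul1mx !mul0mx. 
  by rewrite !mul_mx_row !mulmx1 !mulmx0 add_col_mx addr0 add0r.
by apply: psdD; apply: psd_congr.
Qed.


Hypotheses (HQf : psd (pQf p)) (HQft : psd (pQft p))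
  (HQ : forall k, psd (pQ p k)) (HQt : forall k, psd (pQt p k))
  (HR : forall k (lam : R), 0 <= lam -> pd (pR p k + lam *: pRt p k))
  (HV : pd (pV p)) (HW : pd (pW p)).

Lemma PmE lam k X :
  Pm lam k X = bdiag (Qp lam k) (Rp lam k) + (AB p)^T *m X *m AB p.
Proof.
by rewrite /Pm /bdiag /AB tr_row_mx mul_col_mx mul_col_row add_block_mx !add0r.
Qed.

Lemma Qp_psd lam k : 0 <= lam -> psd (Qp lam k).
Proof. by move=> hl; apply: psdD => //; apply: psdZ. Qed.

Lemma Gm_pd lam k X : 0 <= lam -> psd X -> pd (Gm lam k X).
Proof. by move=> hl hX; apply: pd_psdD; [exact: HR | exact: psd_congr]. Qed.

Lemma Pm_psd lam k X : 0 <= lam -> psd X -> psd (Pm lam k X).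
Proof.
move=> hl hX; rewrite PmE; apply: psdD; last exact: psd_congr.
by apply: psd_bdiag; [exact: Qp_psd | apply: pd_psd; exact: HR].
Qed.

Lemma Ric_psd lam k X : 0 <= lam -> psd X -> psd (Ric_step p lam k X).
Proof.
move=> hl hX; have hG := Gm_pd lam k X hl hX.
rewrite -key_ric; first exact/psd_congr/Pm_psd.
- exact: hX.1.
- exact: hG.1.
- exact: pd_unit.
Qed.

Lemma Xrec_psd lam i : 0 <= lam -> psd (Xrec p lam i).
Proof.
move=> hl; elim: i => [|i IH] /=; first by apply: psdD => //; apply: psdZ.
exact: Ric_psd.
Qed.

Lemma Xlam_psd lam k : 0 <= lam -> psd (Xlam p lam k).
Proof. exact: Xrec_psd. Qed.

Lemma Plam_psd lam k : 0 <= lam -> psd (Plam p lam k).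
Proof. by move=> hl; rewrite PlamE; apply: Pm_psd => //; exact: Xlam_psd. Qed.

Lemma Glam_pd lam k : 0 <= lam -> pd (Gm lam k (Xlam p lam k.+1)).
Proof. by move=> hl; apply: Gm_pd => //; exact: Xlam_psd. Qed.

Lemma XlamS lam k : (k < pN p)%N ->
  Xlam p lam k = Ric_step p lam k (Xlam p lam k.+1).
Proof.
move=> hk; rewrite /Xlam.
have hi : (pN p - k = (pN p - k.+1).+1)%N by rewrite subnSK.
have hk' : (pN p - (pN p - k.+1).+1 = k)%N by rewrite -hi subKn // ltnW.
rewrite hi.
change (Ric_step p lam (pN p - (pN p - k.+1).+1) (Xrec p lam (pN p - k.+1)) =
  Ric_step p lam k (Xrec p lam (pN p - k.+1))).
by rewrite hk'.
Qed.

Lemma XlamN lam : Xlam p lam (pN p) = pQf p + lam *: pQft p.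
Proof. by rewrite /Xlam subnn. Qed.

Lemma IFPlam lam k : 0 <= lam -> (k < pN p)%N ->
  (IF (Flam p lam k))^T *m Plam p lam k *m IF (Flam p lam k) = Xlam p lam k.
Proof.
move=> hl hk; rewrite PlamE FlamE key_ric; first by rewrite [RHS]XlamS.
- exact: (Xlam_psd lam k.+1 hl).1.
- exact: (Glam_pd lam k hl).1.
- exact: pd_unit (Glam_pd lam k hl).
Qed.

Lemma sum_single (a b j : nat) (x : R) :
  \sum_(a <= k < b) (if k == j then x else 0) = if (a <= j < b)%N then x else 0.
Proof.
elim: b => [|b IH]; first by rewrite big_geq // ltn0 andbF.
case: (leqP a b) => hab.
  rewrite big_nat_recr //= IH.
  case: (eqVneq b j) => [<-|hbj].
    by rewrite ltnn andbF hab leqnn add0r.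
  rewrite addr0; congr (if _ then _ else _).
  by rewrite ltnS [(j <= b)%N]leq_eqVlt eq_sym (negbTE hbj).
rewrite big_geq //; case: ifP => // /andP[h1 h2]; lia.
Qed.

Lemma sum_change (a b j : nat) (f f' : nat -> R) :
  (a <= j < b)%N -> (forall k, k != j -> f' k = f k) ->
  \sum_(a <= k < b) f' k = \sum_(a <= k < b) f k + (f' j - f j).
Proof.
move=> hj hf.
have -> : \sum_(a <= k < b) f' k =
   \sum_(a <= k < b) (f k + (if k == j then f' j - f j else 0)).
  apply: eq_bigr => k _; case: (eqVneq k j) => [->|hk].
    by rewrite addrC subrK.
  by rewrite addr0 hf.
by rewrite big_split /= sum_single hj.
Qed.

Lemma tr_sq0 k l (Y : 'M[R]_(k, l)) : \tr (Y *m Y^T) = 0 -> Y = 0.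
Proof.
move=> H.
have H2 : \sum_(i < k) \sum_(j < l) Y i j ^+ 2 = 0.
  rewrite -[RHS]H /mxtrace; apply: eq_bigr => i _; rewrite mxE.
  by apply: eq_bigr => j _; rewrite mxE expr2.
apply/matrixP => i j; rewrite [RHS]mxE.
have Hi : \sum_(j < l) Y i j ^+ 2 = 0.
  by apply: (psumr_eq0P _ H2) => // i0 _; apply: sumr_ge0 => j0 _; exact: sqr_ge0.
have Hij : Y i j ^+ 2 = 0 by apply: (psumr_eq0P _ Hi) => // j0 _; exact: sqr_ge0.
by move/eqP: Hij; rewrite sqrf_eq0 => /eqP.
Qed.

Lemma psd_congrT k l (M : 'M[R]_k) (X : 'M[R]_(l, k)) :
  psd M -> psd (X *m M *m X^T).
Proof. by move=> h; have := @psd_congr _ _ M X^T h; rewrite trmxK. Qed.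

Lemma psd_outer k l (Y : 'M[R]_(k, l)) : psd (Y *m Y^T).
Proof.
split; first by rewrite trmx_mul trmxK.
move=> x; have -> : x^T *m (Y *m Y^T) *m x = (Y^T *m x)^T *m (Y^T *m x).
  by rewrite trmx_mul trmxK !mulmxA.
rewrite mxE; apply: sumr_ge0 => i _; rewrite mxE -expr2; exact: sqr_ge0.
Qed.

Definition M0 := pV p + pz p *m (pz p)^T.
Definition Mk (S : 'M[R]_(n + m)) := AB p *m S *m (AB p)^T + pW p.

Lemma M0_pd : pd M0.
Proof. by apply: pd_psdD => //; exact: psd_outer. Qed.

Lemma Mk_pd S : psd S -> pd (Mk S).
Proof. by move=> hS; rewrite /Mk addrC; apply: pd_psdD => //; exact: psd_congrT. Qed.

Lemma traj_psd F k : psd (traj p F k).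
Proof.
elim: k => [|k IH] /=.
  by apply: psd_congrT; apply: pd_psd; exact: M0_pd.
by apply: psd_congrT; apply: pd_psd; exact: Mk_pd.
Qed.

Lemma traj_ext F F' k : (forall i, (i <= k)%N -> F i = F' i) -> traj p F k = traj p F' k.
Proof.
elim: k => [|k IH] h /=; first by rewrite h.
by rewrite h // IH // => i hi; apply: h; exact: leqW.
Qed.

Lemma traj_eq S F : S 0%N = Sinit p (F 0%N) ->
  (forall k, (1 <= k < pN p)%N -> S k = Phi p (F k) (S k.-1)) ->
  forall k, (k < pN p)%N -> S k = traj p F k.
Proof.
move=> h0 hk; elim=> [|k IH] hkN //=.
by rewrite hk ?hkN //= IH // ltnW.
Qed.

Lemma Ccost_ext S S' : (0 < pN p)%N -> (forall k, (k < pN p)%N -> S k = S' k) ->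
  Ccost p S = Ccost p S'.
Proof.
move=> hN h; rewrite /Ccost h; last by rewrite prednK.
by congr (_ + _); apply: eq_bigr => i _; rewrite h.
Qed.

Lemma sum_single_f (a b j : nat) (x : nat -> R) :
  \sum_(a <= k < b) (if k == j then x k else 0) = if (a <= j < b)%N then x j else 0.
Proof.
rewrite -sum_single; apply: eq_bigr => k _.
by case: eqP => [->|].
Qed.

Lemma sum_single_ord (N j : nat) (x : nat -> R) :
  \sum_(k < N) (if (k : nat) == j then x k else 0) = if (j < N)%N then x j else 0.
Proof.
by rewrite -(big_mkord xpredT (fun k => if k == j then x k else 0)) sum_single_f.
Qed.

Lemma updE (S : nat -> 'M[R]_(n + m)) j D t k :
  upd S j (S j + t *: D) k = S k + (if k == j then t *: D else 0).
Proof. by rewrite /upd; case: eqP => [->|]; rewrite ?addr0. Qed.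

Lemma tr_upd (S : nat -> 'M[R]_(n + m)) j D t k (X : 'M[R]_(n + m)) :
  \tr (X *m upd S j (S j + t *: D) k) =
  \tr (X *m S k) + (if k == j then t * \tr (X *m D) else 0).
Proof.
rewrite updE mulmxDr mxtraceD; case: eqP => _.
  by rewrite -scalemxAr mxtraceZ.
by rewrite mulmx0 mxtrace0.
Qed.

Lemma PhiD F S D : Phi p F (S + D) =
  Phi p F S + IF F *m (AB p *m D *m (AB p)^T) *m (IF F)^T.
Proof.
by rewrite /Phi !mulmxDr !mulmxDl !mulmxDr !mulmxDl addrAC.
Qed.

Definition cost (Xf : 'M[R]_n) (Qs : nat -> 'M[R]_n) (Rs : nat -> 'M[R]_m)
  (S : nat -> 'M[R]_(n + m)) :=
  \tr (Xf *m (AB p *m S (pN p).-1 *m (AB p)^T + pW p))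
  + \sum_(k < pN p) \tr (bdiag (Qs k) (Rs k) *m S k).

Lemma JpE S : Jp p S = cost (pQf p) (pQ p) (pR p) S. Proof. by []. Qed.
Lemma CcostE S : Ccost p S = cost (pQft p) (pQt p) (pRt p) S. Proof. by []. Qed.

Lemma cost_upd Xf Qs Rs S j D t : (j < pN p)%N ->
  cost Xf Qs Rs (upd S j (S j + t *: D)) = cost Xf Qs Rs S
   + (if (j.+1 < pN p)%N then 0 else t * \tr (Xf *m (AB p *m D *m (AB p)^T)))
   + t * \tr (bdiag (Qs j) (Rs j) *m D).
Proof.
move=> hj; rewrite /cost.
have -> : \sum_(k < pN p) \tr (bdiag (Qs k) (Rs k) *m upd S j (S j + t *: D) k)
   = \sum_(k < pN p) \tr (bdiag (Qs k) (Rs k) *m S k)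
     + t * \tr (bdiag (Qs j) (Rs j) *m D).
  under eq_bigr => k _ do rewrite tr_upd.
  rewrite big_split /=.
  by rewrite (sum_single_ord _ _ (fun k => t * \tr (bdiag (Qs k) (Rs k) *m D))) hj.
rewrite updE.
case: (ltnP j.+1 (pN p)) => hjN /=.
  have -> : ((pN p).-1 == j) = false by apply/negbTE/eqP; lia.
  by rewrite /= !addr0 addrA.
have -> : ((pN p).-1 == j) = true by apply/eqP; lia.
rewrite /=.
have -> : AB p *m (S (pN p).-1 + t *: D) *m (AB p)^T + pW p =
  (AB p *m S (pN p).-1 *m (AB p)^T + pW p) + t *: (AB p *m D *m (AB p)^T).
  by rewrite mulmxDr mulmxDl -scalemxAr -scalemxAl addrAC.
rewrite mulmxDr mxtraceD -scalemxAr mxtraceZ.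
ring.
Qed.

Lemma trN k (X : 'M[R]_k) : \tr (- X) = - \tr X.
Proof. exact: raddfN. Qed.

Lemma sum_upd (P : nat -> 'M[R]_(n + m)) S F j D t : (j < pN p)%N ->
 \sum_(1 <= k < pN p) \tr ((Phi p (F k) (upd S j (S j + t *: D) k.-1)
                            - upd S j (S j + t *: D) k) *m P k)
 = \sum_(1 <= k < pN p) \tr ((Phi p (F k) (S k.-1) - S k) *m P k)
   + (if (j.+1 < pN p)%N then t * \tr (IF (F j.+1) *m (AB p *m D *m (AB p)^T)
                                  *m (IF (F j.+1))^T *m P j.+1) else 0)
   - (if (1 <= j)%N then t * \tr (D *m P j) else 0).
Proof.
move=> hj.
have Ek k : (1 <= k < pN p)%N ->
  \tr ((Phi p (F k) (upd S j (S j + t *: D) k.-1) - upd S j (S j + t *: D) k) *m P k)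
  = \tr ((Phi p (F k) (S k.-1) - S k) *m P k)
    + (if k == j.+1 then t * \tr (IF (F k) *m (AB p *m D *m (AB p)^T)
                              *m (IF (F k))^T *m P k) else 0)
    - (if k == j then t * \tr (D *m P k) else 0).
  move=> /andP[hk _]; rewrite !updE.
  have -> : (k.-1 == j) = (k == j.+1) by apply/eqP/eqP; lia.
  case: (eqVneq k j.+1) => [hk1|hk1]; case: (eqVneq k j) => [hk2|hk2] /=.
  - lia.
  - rewrite !addr0 subr0 PhiD addrAC mulmxDl mxtraceD.
    by rewrite -scalemxAr -scalemxAl -scalemxAr -scalemxAl -scalemxAl mxtraceZ.
  - rewrite !addr0 opprD addrA mulmxDl mxtraceD mulNmx trN -scalemxAl mxtraceZ.
    by [].
  - by rewrite !addr0 subr0.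
rewrite (eq_big_nat _ _ Ek) sumrB big_split /=.
rewrite (sum_single_f _ _ _ (fun k => t * \tr (IF (F k) *m (AB p *m D *m (AB p)^T)
                              *m (IF (F k))^T *m P k))).
rewrite (sum_single_f _ _ _ (fun k => t * \tr (D *m P k))).
by rewrite hj andbT.
Qed.

Lemma init_upd (P : nat -> 'M[R]_(n + m)) S F j D t :
  \tr ((Sinit p (F 0%N) - upd S j (S j + t *: D) 0%N) *m P 0%N)
  = \tr ((Sinit p (F 0%N) - S 0%N) *m P 0%N)
    - (if 0%N == j then t * \tr (D *m P 0%N) else 0).
Proof.
rewrite updE; case: eqP => _ /=.
  by rewrite opprD addrA mulmxDl mxtraceD mulNmx trN -scalemxAl mxtraceZ.
by rewrite !addr0 subr0.
Qed.

Lemma trA1 (X : 'M[R]_n) (D : 'M[R]_(n + m)) :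
  \tr ((AB p)^T *m X *m AB p *m D) = \tr (X *m (AB p *m D *m (AB p)^T)).
Proof.
have -> : (AB p)^T *m X *m AB p *m D = (AB p)^T *m (X *m (AB p *m D)) by rewrite !mulmxA.
by rewrite mxtrace_mulC !mulmxA.
Qed.

Lemma trA2 F (P : 'M[R]_(n + m)) (D : 'M[R]_(n + m)) :
  \tr ((AB p)^T *m ((IF F)^T *m P *m IF F) *m AB p *m D)
  = \tr (IF F *m (AB p *m D *m (AB p)^T) *m (IF F)^T *m P).
Proof.
rewrite trA1.
set Y := AB p *m D *m (AB p)^T.
have -> : (IF F)^T *m P *m IF F *m Y = (IF F)^T *m (P *m IF F *m Y) by rewrite !mulmxA.
rewrite mxtrace_mulC.
have -> : P *m IF F *m Y *m (IF F)^T = P *m (IF F *m Y *m (IF F)^T) by rewrite !mulmxA.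
by rewrite mxtrace_mulC.
Qed.

Definition NX lam (P : nat -> 'M[R]_(n + m)) (F : nat -> 'M[R]_(m, n)) j : 'M[R]_n :=
  if (j.+1 < pN p)%N then (IF (F j.+1))^T *m P j.+1 *m IF (F j.+1)
  else pQf p + lam *: pQft p.

Definition Hm lam P F j : 'M[R]_(n + m) :=
  bdiag (Qp lam j) (Rp lam j) + (AB p)^T *m NX lam P F j *m AB p - P j.

Lemma bdiagD lam j : bdiag (Qp lam j) (Rp lam j) =
  bdiag (pQ p j) (pR p j) + lam *: bdiag (pQt p j) (pRt p j).
Proof. by rewrite /bdiag scale_block_mx !scaler0 add_block_mx !add0r. Qed.

Lemma trHm lam P F j D : \tr (Hm lam P F j *m D) =
  \tr (bdiag (pQ p j) (pR p j) *m D) + lam * \tr (bdiag (pQt p j) (pRt p j) *m D)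
  + \tr ((AB p)^T *m NX lam P F j *m AB p *m D) - \tr (D *m P j).
Proof.
rewrite /Hm bdiagD !mulmxDl mulNmx !mxtraceD trN -scalemxAl mxtraceZ.
by rewrite (mxtrace_mulC (P j)).
Qed.

Lemma Lagr_S lam P S F j D t : (j < pN p)%N ->
  Lagr p lam P (upd S j (S j + t *: D)) F
  = Lagr p lam P S F + t * \tr (Hm lam P F j *m D).
Proof.
move=> hj; rewrite /Lagr !JpE !CcostE !cost_upd // sum_upd // init_upd trHm /NX.
case: (ltnP j.+1 (pN p)) => hjN /=.
  rewrite trA2.
  case: j hj hjN => [|j] hj hjN /=; ring.
rewrite trA1 (mulmxDl (pQf p)) mxtraceD -scalemxAl mxtraceZ.
case: j hj hjN => [|j] hj hjN /=; ring.
Qed.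

Lemma quad_exp (M : 'M[R]_n) (P : 'M[R]_(n + m)) (F E : 'M[R]_(m, n)) t :
  M^T = M -> P^T = P ->
  \tr (IF (F + t *: E) *m M *m (IF (F + t *: E))^T *m P)
  = \tr (IF F *m M *m (IF F)^T *m P)
    + t * (2 * \tr (rsubmx (M *m (IF F)^T *m P) *m E))
    + t ^+ 2 * \tr (col_mx 0 E *m M *m (col_mx 0 E)^T *m P).
Proof.
move=> HM HP.
set K := col_mx (0 : 'M[R]_n) E.
set I := IF F.
have hIF : IF (F + t *: E) = I + t *: K.
  by rewrite /I /K /IF scale_col_mx scaler0 add_col_mx addr0.
have hsym : \tr (I *m M *m K^T *m P) = \tr (K *m M *m I^T *m P).
  rewrite -mxtrace_tr !trmx_mul !trmxK HM HP.
  have -> : P *m (K *m (M *m I^T)) = P *m (K *m M *m I^T) by rewrite !mulmxA.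
  by rewrite mxtrace_mulC.
have hrs : \tr (K *m M *m I^T *m P) = \tr (rsubmx (M *m I^T *m P) *m E).
  have -> : K *m M *m I^T *m P = K *m (M *m I^T *m P) by rewrite !mulmxA.
  rewrite mxtrace_mulC /K.
  by rewrite -{1}[M *m I^T *m P]hsubmxK mul_row_col mulmx0 add0r.
have hT : (I + t *: K)^T = I^T + t *: K^T by apply/matrixP => a b; rewrite !mxE.
rewrite hIF hT.
rewrite ?mulmxDl ?mulmxDr ?mulmxDl ?mulmxDr ?mulmxDl ?mulmxDr.
rewrite ?(=^~ scalemxAl) ?(=^~ scalemxAr) ?(=^~ scalemxAl) ?(=^~ scalemxAr).
rewrite ?(=^~ scalemxAl) ?(=^~ scalemxAr).
rewrite !mxtraceD !mxtraceZ hsym hrs.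
ring.
Qed.

Definition Mj (S : nat -> 'M[R]_(n + m)) j := if j == 0%N then M0 else Mk (S j.-1).

Lemma Lagr_F lam P S F j E t : (j < pN p)%N -> (P j)^T = P j -> (Mj S j)^T = Mj S j ->
  Lagr p lam P S (upd F j (F j + t *: E))
  = Lagr p lam P S F
    + t * (2 * \tr (rsubmx (Mj S j *m (IF (F j))^T *m P j) *m E))
    + t ^+ 2 * \tr (col_mx 0 E *m Mj S j *m (col_mx 0 E)^T *m P j).
Proof.
rewrite /Lagr /Mj; case: j => [|j] hj HP HM /=; rewrite /= in HM.
  have -> : \sum_(1 <= k < pN p) \tr ((Phi p (upd F 0 (F 0%N + t *: E) k) (S k.-1) - S k) *m P k)
    = \sum_(1 <= k < pN p) \tr ((Phi p (F k) (S k.-1) - S k) *m P k).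
    apply: eq_big_nat => k /andP[hk _]; rewrite /upd.
    by have -> : (k == 0%N) = false by case: k hk.
  rewrite /upd eqxx !mulmxBl !mxtraceD !trN /Sinit.
  rewrite (quad_exp _ _ _ _ _ HM HP) /M0.
  ring.
have -> : \tr ((Sinit p (upd F j.+1 (F j.+1 + t *: E) 0%N) - S 0%N) *m P 0%N)
   = \tr ((Sinit p (F 0%N) - S 0%N) *m P 0%N) by rewrite /upd.
rewrite (@sum_change 1 (pN p) j.+1 (fun k => \tr ((Phi p (F k) (S k.-1) - S k) *m P k))
  (fun k => \tr ((Phi p (upd F j.+1 (F j.+1 + t *: E) k) (S k.-1) - S k) *m P k))).
- rewrite /= /upd eqxx !mulmxBl !mxtraceD !trN /Phi.
  rewrite (quad_exp _ _ _ _ _ HM HP) /Mk.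
  ring.
- by rewrite hj.
- by move=> k hk; rewrite /upd (negbTE hk).
Qed.

Lemma deriv_quad (f : R -> R) a b c :
  (forall t, f t = a + t * b + t ^+ 2 * c) ->
  (is_derive (0:R) (1:R) f 0 <-> b = 0).
Proof.
move=> Hf.
have Hp : f = (fun t => a + t * b + t * (t * c)).
  by apply/funext => t; rewrite Hf expr2 mulrA.
have D : is_derive (0:R) (1:R) f b.
  rewrite Hp; apply: is_derive_eq.
  by rewrite !scale0r mul0r !add0r mul1r scale0r addr0 [b%:A]mulr1.
split.
- move=> H; have E1 := @derive_val _ _ _ _ _ _ _ D.
  have E2 := @derive_val _ _ _ _ _ _ _ H.
  by rewrite -E1 E2.
- by move=> b0; rewrite b0 in D.
Qed.

Lemma bdiag_sym (Q : 'M[R]_n) (Rm : 'M[R]_m) : Q^T = Q -> Rm^T = Rm ->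
  (bdiag Q Rm)^T = bdiag Q Rm.
Proof. by move=> h1 h2; rewrite /bdiag tr_block_mx !trmx0 h1 h2. Qed.

Lemma congr_sym k l (X : 'M[R]_k) (Y : 'M[R]_(k, l)) : X^T = X -> (Y^T *m X *m Y)^T = Y^T *m X *m Y.
Proof. by move=> h; rewrite !trmx_mul trmxK h mulmxA. Qed.

Lemma Hm_sym lam P F j : 0 <= lam -> (P j)^T = P j -> (NX lam P F j)^T = NX lam P F j ->
  (Hm lam P F j)^T = Hm lam P F j.
Proof.
move=> hl h1 h2; rewrite /Hm raddfB raddfD /= h1 congr_sym // bdiag_sym //.
- exact: (Qp_psd lam j hl).1.
- exact: (HR j lam hl).1.
Qed.

Lemma statS_Hm lam P S F j : (j < pN p)%N -> (Hm lam P F j)^T = Hm lam P F j ->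
  (forall D, Defs.symmetric D -> is_derive (0:R) (1:R)
     (fun t : R => Lagr p lam P (upd S j (S j + t *: D)) F) 0) ->
  Hm lam P F j = 0.
Proof.
move=> hj hs hd; have := hd _ hs.
rewrite (@deriv_quad _ (Lagr p lam P S F) (\tr (Hm lam P F j *m Hm lam P F j)) 0).
  by move=> h; apply: tr_sq0; rewrite hs.
by move=> t; rewrite Lagr_S // mulr0 addr0.
Qed.

Lemma Hm_statS lam P S F j : (j < pN p)%N -> Hm lam P F j = 0 ->
  (forall D, Defs.symmetric D -> is_derive (0:R) (1:R)
     (fun t : R => Lagr p lam P (upd S j (S j + t *: D)) F) 0).
Proof.
move=> hj h0 D _.
rewrite (@deriv_quad _ (Lagr p lam P S F) (\tr (Hm lam P F j *m D)) 0).
  by rewrite h0 mul0mx mxtrace0.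
by move=> t; rewrite Lagr_S // mulr0 addr0.
Qed.

Lemma statF_Y lam P S F j : (j < pN p)%N -> (P j)^T = P j -> (Mj S j)^T = Mj S j ->
  (forall E, is_derive (0:R) (1:R)
     (fun t : R => Lagr p lam P S (upd F j (F j + t *: E))) 0) ->
  rsubmx (Mj S j *m (IF (F j))^T *m P j) = 0.
Proof.
move=> hj hP hM hd.
set Y := rsubmx (Mj S j *m (IF (F j))^T *m P j).
have := hd Y^T.
rewrite (@deriv_quad _ (Lagr p lam P S F) (2 * \tr (Y *m Y^T))
   (\tr (col_mx 0 Y^T *m Mj S j *m (col_mx 0 Y^T)^T *m P j))).
  move/eqP; rewrite mulf_eq0 pnatr_eq0 /= => /eqP.
  exact: tr_sq0.
by move=> t; rewrite Lagr_F.
Qed.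

Lemma Y_statF lam P S F j : (j < pN p)%N -> (P j)^T = P j -> (Mj S j)^T = Mj S j ->
  rsubmx (Mj S j *m (IF (F j))^T *m P j) = 0 ->
  (forall E, is_derive (0:R) (1:R)
     (fun t : R => Lagr p lam P S (upd F j (F j + t *: E))) 0).
Proof.
move=> hj hP hM hY E.
rewrite (@deriv_quad _ (Lagr p lam P S F) (2 * \tr (rsubmx (Mj S j *m (IF (F j))^T *m P j) *m E))
   (\tr (col_mx 0 E *m Mj S j *m (col_mx 0 E)^T *m P j))).
  by rewrite hY mul0mx mxtrace0 mulr0.
by move=> t; rewrite Lagr_F.
Qed.

Lemma F_uniq lam k X (F : 'M[R]_(m, n)) : X^T = X -> (Gm lam k X)^T = Gm lam k X ->
  Gm lam k X \in unitmx ->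
  (pA p)^T *m X *m pB p + F^T *m Gm lam k X = 0 -> F = Fm lam k X.
Proof.
move=> hX hG hU h.
have h2 : Gm lam k X *m F = - ((pB p)^T *m X *m pA p).
  apply/eqP; rewrite -subr_eq0 opprK addrC.
  have := congr1 trmx h; rewrite raddfD /= !trmx_mul !trmxK hX hG trmx0.
  by rewrite mulmxA => ->.
rewrite -[F](mulKmx hU) h2 /Fm mulmxN.
by rewrite !mulmxA.
Qed.

Lemma NX_lam lam P F j : 0 <= lam -> (j < pN p)%N ->
  ((j.+1 < pN p)%N -> P j.+1 = Plam p lam j.+1 /\ F j.+1 = Flam p lam j.+1) ->
  NX lam P F j = Xlam p lam j.+1.
Proof.
move=> hl hj IH; rewrite /NX; case: ltnP => h.
  by case: (IH h) => -> ->; rewrite IFPlam.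
have -> : j.+1 = pN p by lia.
by rewrite XlamN.
Qed.

Lemma step_back lam S F P j : 0 <= lam -> KKT p lam S F P -> (j < pN p)%N ->
  ((j.+1 < pN p)%N -> P j.+1 = Plam p lam j.+1 /\ F j.+1 = Flam p lam j.+1) ->
  P j = Plam p lam j /\ F j = Flam p lam j.
Proof.
move=> hl [hsym [h0 [hk [hC [hslack [hlam [hS hF]]]]]]] hj IH.
have hNX := @NX_lam lam P F j hl hj IH.
have hHm : Hm lam P F j = 0.
  apply: (@statS_Hm lam P S F j hj); last exact: hS.
  apply: Hm_sym => //; first exact: (hsym j hj).2.
  rewrite hNX; exact: (Xlam_psd lam j.+1 hl).1.
have hP : P j = Plam p lam j.
  by rewrite PlamE PmE -hNX; apply/esym/subr0_eq; exact: hHm.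
split=> //.
have hTraj := @traj_eq S F h0 hk.
have hMpd : pd (Mj S j).
  rewrite /Mj; case: eqP => hj0; first exact: M0_pd.
  apply: Mk_pd; rewrite hTraj; [exact: traj_psd | lia].
have hY := @statF_Y lam P S F j hj (hsym j hj).2 hMpd.1 (hF j hj).
rewrite -mulmxA -mulmx_rsub in hY.
have hY2 : rsubmx ((IF (F j))^T *m P j) = 0.
  by rewrite -[rsubmx _](mulKmx (@pd_unit _ _ hMpd)) hY mulmx0.
rewrite hP PlamE /Pm rsubIFP in hY2.
rewrite FlamE; apply: F_uniq hY2.
- exact: (Xlam_psd lam j.+1 hl).1.
- exact: (Glam_pd lam j hl).1.
- exact: pd_unit (Glam_pd lam j hl).
Qed.

Lemma back_all lam S F P : 0 <= lam -> KKT p lam S F P ->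
  forall j, (j < pN p)%N -> P j = Plam p lam j /\ F j = Flam p lam j.
Proof.
move=> hl hK.
suff H : forall i j, (pN p - i <= j < pN p)%N -> P j = Plam p lam j /\ F j = Flam p lam j.
  by move=> j hj; apply: (H (pN p)); rewrite subnn hj.
elim=> [|i IH] j /andP[h1 h2]; first lia.
have [hji|hji] := leqP (pN p - i) j; first by apply: IH; rewrite hji.
apply: (@step_back lam S F P j hl hK h2) => hj1; apply: IH; apply/andP; split; lia.
Qed.

Lemma Y_lam lam k (M : 'M[R]_n) : 0 <= lam -> (k < pN p)%N ->
  rsubmx (M *m (IF (Flam p lam k))^T *m Plam p lam k) = 0.
Proof.
move=> hl hk.
rewrite -mulmxA -mulmx_rsub PlamE FlamE /Pm rsubIFP key_rsub ?mulmx0 //.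
- exact: (Xlam_psd lam k.+1 hl).1.
- exact: (Glam_pd lam k hl).1.
- exact: pd_unit (Glam_pd lam k hl).
Qed.

Lemma main_sec lam S F P : (0 < pN p)%N -> Ccost p (Slam p 0) > pgamma p ->
  KKT p lam S F P <->
    (0 < lam /\ Ccost p (Slam p lam) = pgamma p /\
     forall k, (k < pN p)%N ->
       S k = Slam p lam k /\ F k = Flam p lam k /\ P k = Plam p lam k).
Proof.
move=> hN hC0; split.
- move=> hK; have hK' := hK.
  case: hK' => [hsym [h0 [hk [hC [hslack [hlam _]]]]]].
  have hPF := @back_all lam S F P hlam hK.
  have hSeq : forall k, (k < pN p)%N -> S k = Slam p lam k.
    move=> k hk'; rewrite (@traj_eq S F h0 hk k hk') /Slam.
    by apply: traj_ext => i hi; exact: (hPF i (leq_ltn_trans hi hk')).2.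
  have hCS : Ccost p S = Ccost p (Slam p lam) := @Ccost_ext _ _ hN hSeq.
  have hlpos : 0 < lam.
    rewrite lt_neqAle hlam andbT; apply/eqP => hl0.
    move: hC; rewrite hCS -hl0 => hC'; lra.
  split=> //; split.
    move: hslack => /eqP; rewrite mulf_eq0 gt_eqF //= subr_eq0 => /eqP.
    by rewrite hCS.
  move=> k hk'; split; first exact: hSeq.
  by case: (hPF k hk') => -> ->.
- move=> [hl [hC hall]].
  have hl0 := ltW hl.
  have hSk k : (k < pN p)%N -> S k = Slam p lam k by move=> h; case: (hall k h).
  have hFk k : (k < pN p)%N -> F k = Flam p lam k by move=> h; case: (hall k h) => _ [].
  have hPk k : (k < pN p)%N -> P k = Plam p lam k by move=> h; case: (hall k h) => _ [].
  have hCS : Ccost p S = Ccost p (Slam p lam) := @Ccost_ext _ _ hN hSk.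
  split.
    move=> k hk; rewrite hSk // hPk //; split.
      exact: (traj_psd (Flam p lam) k).1.
    exact: (Plam_psd lam k hl0).1.
  split; first by rewrite hSk // hFk.
  split.
    case=> [|k] /andP[h1 h2] //=.
    by rewrite hSk // hFk // hSk // ltnW.
  split; first by rewrite hCS hC.
  split; first by rewrite hCS hC subrr mulr0.
  split; first exact: hl0.
  have hNX j : (j < pN p)%N -> NX lam P F j = Xlam p lam j.+1.
    move=> hj; apply: NX_lam => // h; split; [exact: hPk | exact: hFk].
  split.
    move=> j hj; apply: Hm_statS => //.
    by rewrite /Hm hNX // hPk // PlamE PmE subrr.
  move=> j hj; apply: Y_statF => //.
  - by rewrite hPk //; exact: (Plam_psd lam j hl0).1.
  - rewrite /Mj; case: eqP => _; first exact: M0_pd.1.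
    have hps : psd (S j.-1) by rewrite hSk; [exact: traj_psd | lia].
    exact: (@Mk_pd _ hps).1.
  - by rewrite hFk // hPk //; apply: Y_lam.
Qed.

End Main.

Theorem proposition4 (R : realType) (n m : nat) (p : problem R n m) :
  (0 < pN p)%N ->
  psd (pQf p) -> psd (pQft p) ->
  (forall k, psd (pQ p k)) -> (forall k, psd (pQt p k)) ->
  (forall k (lam : R), 0 <= lam -> pd (pR p k + lam *: pRt p k)) ->
  pd (pV p) -> pd (pW p) ->
  (* strict feasibility of the constraint *)
  (exists F : nat -> 'M[R]_(m, n), Ccost p (traj p F) < pgamma p) ->
  (* nontrivial scenario *)
  Ccost p (Slam p 0) > pgamma p ->
  forall (lam : R) (S : nat -> 'M[R]_(n + m)) (F : nat -> 'M[R]_(m, n))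
         (P : nat -> 'M[R]_(n + m)),
    KKT p lam S F P <->
    (0 < lam /\ Ccost p (Slam p lam) = pgamma p /\
     forall k, (k < pN p)%N ->
       S k = Slam p lam k /\ F k = Flam p lam k /\ P k = Plam p lam k).
Proof.
move=> hN hQf hQft hQ hQt hR hV hW _ hC0 lam S F P.
by apply: main_sec.
Qed.
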